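(* Let $A$ be a complex $m\times m$ matrix, $1\le k\le m$, $\mathbf z=(z_1,\dots,z_k)\in[m]^k$ with multiplicities $s_\nu=|\{i:z_i=\nu\}|$, and let $B$ be the $k\times k$ matrix whose $i$-th row is row $z_i$ of the first $k$ columns of $A$. For $\ell\in[k]$ let $B^{\diamond}_{k,\ell}$ be the $(k-1)\times(k-1)$ submatrix of $B$ obtained by deleting row $k$ and column $\ell$. Then the whole collection $\{\mathrm{Per}\,B^{\diamond}_{k,\ell}:\ell\in[k]\}$ can be computed jointly using $O\!\left(k\prod_{\nu=1}^m(s_\nu+1)\right)$ arithmetic operations (the same bound as for computing $\mathrm{Per}\,B$) and $O(k)$ additional space beyond the input.
   Context: The permanent of a square matrix $(b_{ij})_{i,j\le k}$ is $\sum_\sigma\prod_i b_{i,\sigma(i)}$ over permutations $\sigma$ of $[k]$; $[m]=\{1,\dots,m\}$. Arithmetic operations on complex numbers are counted as unit cost. *)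

(* Defs.v *)
(* Complex numbers are modelled as R[i] = complex R for
   R : realType (the real numbers of MathComp-Analysis). *)
From HB Require Import structures.
From mathcomp Require Import all_boot all_order all_algebra all_fingroup.
From mathcomp Require Import complex.
From mathcomp Require Import reals.

Set Implicit Arguments.
Unset Strict Implicit.
Unset Printing Implicit Defensive.

Import Order.TTheory GRing.Theory Num.Theory.
Local Open Scope ring_scope.

Definition permanent (F : comNzRingType) (n : nat) (M : 'M[F]_n) : F :=
  \sum_(s : 'S_n) \prod_(i < n) M i (s i).

(* ---------- Algebraic straight-line programs (unit-cost arithmetic) -------
   A program over a field F reads the entries of an m x m input matrix
   (read-only), uses W work registers (the additional space), and consists
   of instructions  reg := a1 op a2  where op is +, -, *, / and each operand
   is an input entry, a work register, or a constant of F.  Each instruction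
   is one arithmetic operation; the cost of a program is its length.
   Division uses MathComp's total inverse (x / 0 = 0). *)

Inductive slp_op := SAdd | SSub | SMul | SDiv.

Inductive operand (F : Type) (m W : nat) :=
  | OIn of 'I_m & 'I_m
  | OReg of 'I_W
  | OConst of F.

Record instr (F : Type) (m W : nat) := Instr {
  i_dst : 'I_W;
  i_op : slp_op;
  i_arg1 : operand F m W;
  i_arg2 : operand F m W }.

Definition slp (F : Type) (m W : nat) := seq (instr F m W).

Section Semantics.
Variables (F : fieldType) (m W : nat).

Definition eval_operand (A : 'M[F]_m) (st : 'I_W -> F) (o : operand F m W) : F :=
  match o with
  | OIn i j => A i j
  | OReg r => st r
  | OConst c => c
  end.

Definition eval_op (o : slp_op) (x y : F) : F :=
  match o with
  | SAdd => x + y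
  | SSub => x - y
  | SMul => x * y
  | SDiv => x / y
  end.

Definition step (A : 'M[F]_m) (st : 'I_W -> F) (ins : instr F m W) : 'I_W -> F :=
  let v := eval_op (i_op ins) (eval_operand A st (i_arg1 ins))
                                 (eval_operand A st (i_arg2 ins)) in
  fun r => if r == i_dst ins then v else st r.

Definition run (P : slp F m W) (A : 'M[F]_m) : 'I_W -> F :=
  foldl (step A) (fun _ => 0) P.

End Semantics.

Definition Bmat (F : Type) (m k : nat) (hk : (k <= m)%N) (A : 'M[F]_m)
    (z : 'I_k -> 'I_m) : 'M[F]_k :=
  \matrix_(i < k, j < k) A (z i) (widen_ord hk j).

Definition Bdiamond (F : Type) (n : nat) (B : 'M[F]_n.+1) (l : 'I_n.+1)
    : 'M[F]_n :=
  \matrix_(i < n, j < n) B (widen_ord (leqnSn n) i) (lift l j).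

Definition mult (m k : nat) (z : 'I_k -> 'I_m) (nu : 'I_m) : nat :=
  #|[pred i | z i == nu]|.

(* Main.v *)
Require Import Defs.
From HB Require Import structures.
From mathcomp Require Import all_boot all_order all_algebra all_fingroup.
From mathcomp Require Import complex.
From mathcomp Require Import reals.
From mathcomp Require Import ring zify.
From Stdlib Require Import FunctionalExtensionality.
Set Implicit Arguments.
Unset Strict Implicit.
Unset Printing Implicit Defensive.
Import GRing.Theory Num.Theory.
Local Open Scope ring_scope.

Section Ryser.
Variable F : fieldType.

Definition sgnb (b : bool) : F := if b then 1 else -1.

Lemma surj_inj n (g : {ffun 'I_n -> 'I_n}) :
  (forall i, exists j, g j = i) -> injective g.
Proof.
move=> hs.
pose h i := odflt i [pick j | g j == i].
have gh : cancel h g.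
  move=> i; rewrite /h; case: pickP => [j /eqP //|no].
  by have [j hj] := hs i; move: (no j); rewrite hj eqxx.
have hinj : injective h := can_inj gh.
have [h' hh' h'h] := injF_bij hinj.
have gE x : g x = h' x by rewrite -{1}(h'h x) gh.
by move=> x y; rewrite !gE; apply: (can_inj h'h).
Qed.

Lemma sum_sgn_ind n (g : {ffun 'I_n -> 'I_n}) :
  \sum_(x : {ffun 'I_n -> bool}) (\prod_i sgnb (x i)) * \prod_j ((x (g j))%:R : F)
  = (injectiveb g)%:R.
Proof.
transitivity (\sum_(x : {ffun 'I_n -> bool})
   \prod_i (sgnb (x i) * \prod_(j | g j == i) ((x i)%:R : F))).
  apply: eq_bigr => x _; rewrite big_split /=; congr (_ * _).
  rewrite (partition_big g xpredT) //=; apply: eq_bigr => i _.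
  by apply: eq_bigr => j /eqP->.
rewrite -(bigA_distr_bigA (fun i b => sgnb b * \prod_(j | g j == i) (b%:R : F))) /=.
have E i : \sum_(b : bool) sgnb b * \prod_(j | g j == i) (b%:R : F)
           = ([exists j, g j == i])%:R.
  rewrite big_bool /= mul1r big1_eq.
  case: (pickP (fun j => g j == i)) => [j gj|no].
    rewrite (bigD1 j) //= mul0r mulr0 addr0.
    by have -> : [exists j, g j == i] by apply/existsP; exists j.
  rewrite big_pred0 // mulr1 addrN.
  by have -> : [exists j, g j == i] = false by apply/existsP => -[j]; rewrite no.
under eq_bigr do rewrite E.
case: (boolP (injectiveb g)) => [/injectiveP inj|ninj].
  apply: big1 => i _.
  have [j <-] : exists j, g j = i.
    have := inj_card_onto (f := g) inj (leqnn _) i.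
    by move/codomP => [j ->]; exists j.
  by have -> : [exists j', g j' == g j] by apply/existsP; exists j.
have [i hi] : exists i, ~~ [exists j, g j == i].
  apply/existsP; apply: contraR ninj => /existsPn hs; apply/injectiveP.
  apply: surj_inj => i; have := hs i; rewrite negbK => /existsP [j /eqP <-].
  by exists j.
by rewrite (bigD1 i) //= (negbTE hi) mul0r.
Qed.

Lemma ryser n (M : 'M[F]_n) : permanent M =
  \sum_(x : {ffun 'I_n -> bool}) (\prod_i sgnb (x i)) *
      \prod_(j < n) \sum_(i < n) (x i)%:R * M i j.
Proof.
transitivity (\sum_(g : {ffun 'I_n -> 'I_n}) (injectiveb g)%:R * \prod_j M (g j) j).
  rewrite (bigID (fun g : {ffun _} => injectiveb g)) /= addrC big1 ?add0r; last first.
    by move=> g /negbTE ->; rewrite mul0r.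
  rewrite (reindex (@pval _)) /=; last first.
    pose in_Sn := insubd (1%g : 'S_n).
    by exists in_Sn => /= f Uf; first apply: val_inj; apply: insubdK.
  rewrite /permanent (reindex_inj (@invg_inj _)) /=.
  apply: eq_big => /= [s | s _]; first by rewrite (valP s).
  rewrite ?mul1r (reindex_inj (@perm_inj _ s)) /=; rewrite (valP s) mul1r; apply: eq_bigr => i _.
  by rewrite pvalE permK.
under [RHS]eq_bigr do rewrite bigA_distr_bigA mulr_sumr.
rewrite exchange_big /=; apply: eq_bigr => g _.
transitivity (\sum_(x : {ffun 'I_n -> bool}) ((\prod_i sgnb (x i)) * \prod_j ((x (g j))%:R : F)) * \prod_j M (g j) j); last first.
  by apply: eq_bigr => x _; rewrite big_split /= mulrA.
rewrite -mulr_suml sum_sgn_ind //.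
Qed.
End Ryser.
Lemma cnt_le m n (z : 'I_n.+1 -> 'I_m) nu :
  (count_mem nu [seq z (widen_ord (leqnSn n) i) | i <- enum 'I_n] <= #|[pred i | z i == nu]|)%N.
Proof.
rewrite cardE size_filter -enumT enum_ordSr -cats1 count_cat count_map.
apply: leq_trans (leq_addr _ _). rewrite [X in (_ <= X)%N]count_map.
apply: eq_leq. apply: eq_in_count => i _ /=. by rewrite !inE eq_sym.
Qed.

Section Dops.
Variables (F : fieldType) (V : zmodType).

Definition Dop (r : V) (phi : V -> F) : V -> F := fun c => phi (c + r) - phi c.
Definition Dseq (rs : seq V) phi := foldr Dop phi rs.

Definition fcons n (b : bool) (y : {ffun 'I_n -> bool}) : {ffun 'I_n.+1 -> bool} :=
  [ffun i => if unlift ord0 i is Some j then y j else b].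

Lemma sum_ffunS n (G : {ffun 'I_n.+1 -> bool} -> F) :
  \sum_x G x = \sum_(b : bool) \sum_(y : {ffun 'I_n -> bool}) G (fcons b y).
Proof.
rewrite pair_big /=.
rewrite (reindex (fun p : bool * {ffun 'I_n -> bool} => fcons p.1 p.2)) //=.
exists (fun x => (x ord0, [ffun j => x (lift ord0 j)])) => [[b y] _ | x _] /=.
  congr (_, _); first by rewrite ffunE unlift_none.
  by apply/ffunP => j; rewrite !ffunE liftK.
apply/ffunP => i; rewrite !ffunE; case: unliftP => [j ->|->]; by rewrite ?ffunE.
Qed.

Lemma Dexp n (v : 'I_n -> V) phi c : Dseq (map v (enum 'I_n)) phi c =
  \sum_(x : {ffun 'I_n -> bool}) (\prod_i sgnb F (x i)) * phi (c + \sum_i v i *+ x i).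
Proof.
elim: n v phi c => [|n IH] v phi c.
  rewrite enum_ord0 /=.
  rewrite (big_pred1 [ffun i => false]) /=; last first.
    by move=> x; symmetry; apply/eqP/ffunP => -[].
  by rewrite !big_ord0 mul1r addr0.
rewrite enum_ordSl /= -map_comp /Dop IH IH sum_ffunS big_bool /=.
rewrite -sumrN; congr (_ + _); apply: eq_bigr => y _.
  rewrite big_ord_recl [X in _ * phi (c + X)]big_ord_recl !ffunE unlift_none /= mul1r.
  congr (_ * phi _); first by apply: eq_bigr => i _; rewrite ffunE liftK.
  rewrite addrA; congr (_ + _); apply: eq_bigr => i _; by rewrite ffunE liftK.
rewrite big_ord_recl [X in _ = _ * phi (c + X)]big_ord_recl !ffunE unlift_none /=.
rewrite mulr0n add0r mulN1r mulNr; congr (- (_ * phi _)).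
  by apply: eq_bigr => i _; rewrite ffunE liftK.
congr (_ + _); apply: eq_bigr => i _; by rewrite ffunE liftK.
Qed.

Lemma Dop_comm r1 r2 phi : Dop r1 (Dop r2 phi) = Dop r2 (Dop r1 phi).
Proof.
apply: functional_extensionality => c; rewrite /Dop (addrAC c r2 r1).
ring.
Qed.

Lemma Dop_iter r1 r2 k phi : Dop r1 (iter k (Dop r2) phi) = iter k (Dop r2) (Dop r1 phi).
Proof. by elim: k => //= k IH; rewrite Dop_comm IH. Qed.

Fixpoint wgt (s t : nat) : F :=
  match s with
  | 0 => (t == 0)%:R
  | s'.+1 => (if t is t'.+1 then wgt s' t' else 0) - wgt s' t
  end.

Lemma wgt_out s t : (s < t)%N -> wgt s t = 0.
Proof.
elim: s t => [|s IH] [|t] //= h.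
by rewrite !IH ?subrr // ltnW.
Qed.

Lemma iter_closed r s phi c :
  iter s (Dop r) phi c = \sum_(t < s.+1) wgt s t * phi (c + r *+ t).
Proof.
elim: s c => [|s IH] c; first by rewrite big_ord1 /= mulr0n addr0 mul1r.
rewrite iterS {1}/Dop !IH.
rewrite [in RHS](eq_bigr (fun t : 'I_s.+2 =>
   (if val t is t'.+1 then wgt s t' else 0) * phi (c + r *+ t) - wgt s t * phi (c + r *+ t)));
  last by move=> t _; rewrite /= mulrBl.
rewrite sumrB; congr (_ - _).
  rewrite [RHS]big_ord_recl /= mul0r add0r; apply: eq_bigr => t _.
  by rewrite /bump /= add1n mulrS addrA.
by rewrite [RHS]big_ord_recr /= wgt_out // mul0r addr0.
Qed.

End Dops.
Section Regroup.
Variables (F : fieldType) (V : zmodType) (I : eqType) (rowv : I -> V).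

Definition ClsG (ls zs : seq I) (phi : V -> F) :=
  foldr (fun nu psi => iter (count_mem nu zs) (Dop (rowv nu)) psi) phi ls.

Lemma ClsG_eq ls zs1 zs2 phi :
  (forall nu, nu \in ls -> count_mem nu zs1 = count_mem nu zs2) ->
  ClsG ls zs1 phi = ClsG ls zs2 phi.
Proof.
elim: ls => //= a ls IH h; rewrite h ?mem_head // IH // => nu hn.
by apply: h; rewrite in_cons hn orbT.
Qed.

Lemma ClsG_cons ls zs a phi : uniq ls -> a \in ls ->
  Dop (rowv a) (ClsG ls zs phi) = ClsG ls (a :: zs) phi.
Proof.
elim: ls => //= h ls IH /andP [hn u]; rewrite in_cons.
case: (boolP (a == h)) => [/eqP e|ne] /= ha.
  subst h; rewrite add0n; congr (Dop _ (iter _ _ _)).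
  apply: ClsG_eq => nu hnu /=.
  have -> : (a == nu) = false by apply/eqP => e; move: hn; rewrite e hnu.
  by [].
rewrite Dop_iter IH // (negbTE ne) add0n.
Qed.

Lemma regroup ls zs phi : uniq ls -> {subset zs <= ls} ->
  Dseq (map rowv zs) phi = ClsG ls zs phi.
Proof.
move=> u; elim: zs => [|a zs IH] sub /=.
  by elim: ls {u sub} => //= a ls ->.
rewrite IH ?ClsG_cons //; first by apply: sub; rewrite mem_head.
by move=> x hx; apply: sub; rewrite in_cons hx orbT.
Qed.
End Regroup.
Section Prog.
Variables (F : fieldType) (m n : nat) (hk : (n.+1 <= m)%N) (z : 'I_n.+1 -> 'I_m).
Local Notation K := n.+1.
Definition Wd := (3 * K + 1).+1.
Definition reg (i : nat) : 'I_Wd := inord i.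
Arguments reg i%_N.
Local Notation ins := (instr F m Wd).
Local Notation oR r := (@OReg F m Wd r).
Local Notation oI a b := (@OIn F m Wd a b).
Local Notation oC c := (@OConst F m Wd c).

Definition zs := [seq z (widen_ord (leqnSn n) i) | i <- enum 'I_n].
Definition cnt nu := count_mem nu zs.

Definition rowop (o : slp_op) (nu : 'I_m) : seq ins :=
  [seq Instr (reg (K + j)) o (oR (reg (K + j))) (oI nu (widen_ord hk j)) | j : 'I_K <- enum 'I_K].

Fixpoint pre j : seq ins :=
  match j with
  | 0 => [:: Instr (reg (2 * K)) SAdd (oC 1) (oC 0)]
  | j'.+1 => rcons (pre j')
      (Instr (reg (2 * K + j'.+1)) SMul (oR (reg (2 * K + j'))) (oR (reg (K + j'))))
  end.

Fixpoint bwd j : seq ins :=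
  match j with
  | 0 => [::]
  | j'.+1 => [:: Instr (reg (3 * K + 1)) SMul (oR (reg (2 * K + j'))) (oR (reg (3 * K)));
                 Instr (reg j') SAdd (oR (reg j')) (oR (reg (3 * K + 1)));
                 Instr (reg (3 * K)) SMul (oR (reg (3 * K))) (oR (reg (K + j')))] ++ bwd j'
  end.

Definition leaf (wt : F) : seq ins :=
  pre n ++ Instr (reg (3 * K)) SAdd (oC wt) (oC 0) :: bwd K.

Fixpoint lp (g : nat -> seq ins) (add : seq ins) (t c : nat) : seq ins :=
  match c with
  | 0 => g t
  | c'.+1 => g t ++ add ++ lp g add t.+1 c'
  end.

Fixpoint gen (ls : seq 'I_m) (wt : F) : seq ins :=
  match ls with
  | [::] => leaf wt
  | nu :: ls' => lp (fun t => gen ls' (wt * wgt F (cnt nu) t)) (rowop SAdd nu) 0 (cnt nu)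
                 ++ flatten (nseq (cnt nu) (rowop SSub nu))
  end.

Variable A : 'M[F]_m.
Definition exec (P : seq ins) st := foldl (step A) st P.

Lemma stepE st d o a1 a2 i : (i < Wd)%N -> (d < Wd)%N ->
  step A st (Instr (reg d) o a1 a2) (reg i) =
  if i == d then eval_op o (eval_operand A st a1) (eval_operand A st a2) else st (reg i).
Proof.
move=> hi hd; rewrite /step /=.
by have -> : (reg i == reg d) = (i == d) by rewrite -val_eqE /= /reg !inordK.
Qed.

Ltac simp_if := repeat match goal with
  | |- context [if ?a == ?b then _ else _] =>
      first [ have -> : (a == b) = false by lia | have -> : (a == b) = true by lia ]
  end.

Lemma pre_spec j : (j <= n)%N -> forall st,
  (forall i, (i < 2 * K)%N -> exec (pre j) st (reg i) = st (reg i)) /\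
  (forall l, (l <= j)%N -> exec (pre j) st (reg (2 * K + l)) = \prod_(i < l) st (reg (K + i))).
Proof.
rewrite /Wd; elim: j => [|j IH] hj st.
  split=> [i hi|l hl]; rewrite /exec /= stepE /Wd; try lia; simp_if => //.
  have -> : l = 0%N by lia.
  by rewrite big_ord0 /= addr0.
have [IH1 IH2] := IH (ltnW hj) st.
split=> [i hi|l hl]; rewrite /exec /= foldl_rcons stepE /Wd; try lia; simp_if.
  by apply: IH1.
case: (boolP (l == j.+1)) => [/eqP ->|ne].
  simp_if => /=; change (foldl (step A) st (pre j)) with (exec (pre j) st).
  rewrite IH2 // IH1; last lia.
  by rewrite big_ord_recr.
have -> : (2 * K + l == 2 * K + j.+1) = false by lia.
by apply: IH2; lia.
Qed.
Lemma bwd_spec j : (j <= K)%N -> forall st,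
  (forall l, (l < j)%N -> exec (bwd j) st (reg l) =
     st (reg l) + st (reg (2 * K + l)) *
       (st (reg (3 * K)) * \prod_(l.+1 <= i < j) st (reg (K + i)))) /\
  (forall i, (j <= i)%N -> (i < 3 * K)%N -> exec (bwd j) st (reg i) = st (reg i)).
Proof.
elim: j => [|j IH] hj st; first by split => // l.
pose st3 := step A (step A (step A st
   (Instr (reg (3 * K + 1)) SMul (oR (reg (2 * K + j))) (oR (reg (3 * K)))))
   (Instr (reg j) SAdd (oR (reg j)) (oR (reg (3 * K + 1)))))
   (Instr (reg (3 * K)) SMul (oR (reg (3 * K))) (oR (reg (K + j)))).
have E : exec (bwd j.+1) st = exec (bwd j) st3 by [].
have S3 i : (i < 3 * K)%N -> i != j -> st3 (reg i) = st (reg i).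
  move=> hi hne; rewrite /st3 !stepE /Wd; try lia; simp_if => //.
have S3j : st3 (reg j) = st (reg j) + st (reg (2 * K + j)) * st (reg (3 * K)).
  rewrite /st3 !stepE /Wd; try lia; simp_if => //=.
  by rewrite !stepE /Wd; try lia; simp_if.
have S3q : st3 (reg (3 * K)) = st (reg (3 * K)) * st (reg (K + j)).
  rewrite /st3 !stepE /Wd; try lia; simp_if => //=.
  by rewrite !stepE /Wd; try lia; simp_if.
have [IH1 IH2] := IH (ltnW hj) st3.
rewrite E; split=> [l hl|i hi1 hi2].
  case: (ltngtP l j) => [hlj|hjl|->]; last first.
  - rewrite IH2 //; last lia.
    by rewrite S3j big_geq // mulr1.
  - lia.
  rewrite IH1 // S3 ?S3q; try lia; rewrite S3; try lia.
  rewrite big_nat_recr /=; last by [].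
  rewrite [in RHS]mulrA [X in _ = _ + _ * X]mulrC -!mulrA; congr (_ + _ * (_ * _)).
  congr (_ * _); apply: eq_big_nat => i /andP [h1 h2].
  by rewrite S3 //; lia.
by rewrite IH2 ?S3 //; lia.
Qed.
Definition cv (st : 'I_Wd -> F) : 'rV[F]_K := \row_(j < K) st (reg (K + j)).
Definition rowv (nu : 'I_m) : 'rV[F]_K := \row_(j < K) A nu (widen_ord hk j).
Definition Lf (l : 'I_K) (c : 'rV[F]_K) : F := \prod_(j < n) c 0 (lift l j).

Definition spec (P : seq ins) (G : 'I_K -> 'rV[F]_K -> F) := forall st,
  (forall l : 'I_K, exec P st (reg l) = st (reg l) + G l (cv st)) /\ cv (exec P st) = cv st.
Definition addspec (P : seq ins) (r : 'rV[F]_K) := forall st,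
  (forall l : 'I_K, exec P st (reg l) = st (reg l)) /\ cv (exec P st) = cv st + r.

Lemma prod_lift (f : nat -> F) (l : 'I_K) :
  \prod_(j < n) f (lift l j) = \prod_(i < l) f i * \prod_(l.+1 <= i < K) f i.
Proof.
rewrite -(big_mkord xpredT (fun j => f (bump l j))) (big_cat_nat _ (n := l)) //=; last first.
  by rewrite -ltnS.
congr (_ * _).
  rewrite big_mkord; apply: eq_bigr => i _; rewrite /bump.
  by have -> : (l <= i)%N = false by apply/negbTE; rewrite -ltnNge.
have H (L N : nat) : \prod_(L <= i < N) f (bump L i) = \prod_(L.+1 <= i < N.+1) f i.
  rewrite -[L.+1]addn1 -[N.+1]addn1 big_addn addnK; apply: eq_big_nat => i /andP [h1 h2].
  by rewrite /bump h1 addn1 add1n.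
exact: H.
Qed.

Lemma leaf_spec wt : spec (leaf wt) (fun l c => wt * Lf l c).
Proof.
move=> st.
have [P1 P2] := pre_spec (leqnn n) st.
pose st2 := step A (exec (pre n) st) (Instr (reg (3 * K)) SAdd (oC wt) (oC 0)).
have E : exec (leaf wt) st = exec (bwd K) st2 by rewrite /exec /leaf foldl_cat.
have S2 i : (i < 3 * K)%N -> st2 (reg i) = exec (pre n) st (reg i).
  by move=> hi; rewrite /st2 stepE /Wd; try lia; simp_if.
have S2q : st2 (reg (3 * K)) = wt.
  by rewrite /st2 stepE /Wd; try lia; simp_if; rewrite /= addr0.
have [B1 B2] := bwd_spec (leqnn K) st2.
rewrite E; split=> [l|].
  have hl := ltn_ord l.
  rewrite B1 // S2q S2 ?P1; try lia; rewrite S2 ?P2; try lia.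
  rewrite /Lf (eq_bigr (fun j => st (reg (K + lift l j)))); last first.
    by move=> j _; rewrite mxE.
  rewrite (prod_lift (fun i => st (reg (K + i)))) mulrCA; congr (_ + _ * (_ * _)).
  by apply: eq_big_nat => i /andP [h1 h2]; rewrite S2 ?P1 //; lia.
apply/rowP => j; have hj := ltn_ord j; rewrite !mxE B2 ?S2 ?P1 //; lia.
Qed.
Lemma rowop_gen o (h : F -> F) nu (js : seq 'I_K) st i :
  (forall x y, eval_op o x y = x + h y) -> (i < Wd)%N ->
  exec [seq Instr (reg (K + j)) o (oR (reg (K + j))) (oI nu (widen_ord hk j)) | j : 'I_K <- js] st (reg i)
  = st (reg i) + \sum_(j <- js | (K + j == i)%N) h (A nu (widen_ord hk j)).
Proof.
move=> hop hi; elim: js st => [|j js IH] st /=; first by rewrite big_nil addr0.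
rewrite IH big_cons stepE //; last by rewrite /Wd; have := ltn_ord j; lia.
case: (boolP (i == K + j)) => [/eqP e|ne] /=.
  by rewrite e eqxx /= hop addrA.
by have -> : (K + j == i)%N = false by apply/negbTE; rewrite eq_sym.
Qed.

Lemma rowop_spec o (h : F -> F) nu :
  (forall x y, eval_op o x y = x + h y) ->
  addspec (rowop o nu) (\row_(j < K) h (A nu (widen_ord hk j))).
Proof.
move=> hop st; split=> [l|].
  have hl := ltn_ord l.
  rewrite /rowop (rowop_gen (h := h)) //; last by rewrite /Wd; lia.
  rewrite big1_seq ?addr0 // => j /andP [hj _]; exfalso; move: hj; lia.
apply/rowP => j; have hj := ltn_ord j.
rewrite !mxE /rowop (rowop_gen (h := h)) //; last by rewrite /Wd; lia.
congr (_ + _).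
rewrite (eq_bigl (fun j' => j' == j)); last by move=> j'; rewrite /= eqn_add2l.
by rewrite big_enum_cond /= big_pred1_eq.
Qed.
Lemma exec_cat P1 P2 st : exec (P1 ++ P2) st = exec P2 (exec P1 st).
Proof. by rewrite /exec foldl_cat. Qed.

Lemma nseq_spec P r c : addspec P r -> addspec (flatten (nseq c P)) (r *+ c).
Proof.
move=> hP; elim: c => [|c IH] st /=.
  by split => [l|]; rewrite ?mulr0n ?addr0.
rewrite exec_cat; have [h1 h2] := hP st; have [i1 i2] := IH (exec P st).
by split=> [l|]; rewrite ?i1 ?h1 // i2 h2 mulrS addrA.
Qed.

Lemma lp_spec g add r (f : nat -> 'I_K -> 'rV[F]_K -> F) :
  (forall t, spec (g t) (f t)) -> addspec add r -> forall c t st,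
  (forall l : 'I_K, exec (lp g add t c) st (reg l) =
     st (reg l) + \sum_(i < c.+1) f (t + i)%N l (cv st + r *+ i)) /\
  cv (exec (lp g add t c) st) = cv st + r *+ c.
Proof.
move=> hg ha; elim=> [|c IH] t st /=.
  have [h1 h2] := hg t st; split=> [l|]; last by rewrite h2 mulr0n addr0.
  by rewrite h1 big_ord1 addn0 mulr0n addr0.
rewrite !exec_cat; have [g1 g2] := hg t st; have [a1 a2] := ha (exec (g t) st).
have [i1 i2] := IH t.+1 (exec add (exec (g t) st)).
split=> [l|]; last by rewrite i2 a2 g2 mulrS addrA.
rewrite i1 a1 g1 a2 g2 [in RHS]big_ord_recl addn0 mulr0n addr0 addrA; congr (_ + _).
by apply: eq_bigr => i _; rewrite lift0 addSnnS mulrS addrA.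
Qed.

Lemma gen_spec ls wt :
  spec (gen ls wt) (fun l c => wt * ClsG rowv ls zs (Lf l) c).
Proof.
elim: ls wt => [|nu ls IH] wt /=; first exact: leaf_spec.
move=> st; rewrite exec_cat.
have hA := rowop_spec (o := SAdd) (h := id) nu (fun x y => erefl).
have hS := rowop_spec (o := SSub) (h := -%R) nu (fun x y => erefl).
have [l1 l2] := lp_spec (fun t => IH (wt * wgt F (cnt nu) t)) hA (cnt nu) 0 st.
have [s1 s2] := nseq_spec (cnt nu) hS (exec (lp (fun t => gen ls (wt * wgt F (cnt nu) t))
                    (rowop SAdd nu) 0 (cnt nu)) st).
split=> [l|]; last first.
  rewrite s2 l2; apply/rowP => j; rewrite !(mxE, mulmxnE) /=.
  by rewrite -addrA -mulrnDl subrr mul0rn addr0.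
rewrite s1 l1; congr (_ + _).
rewrite /cnt iter_closed mulr_sumr; apply: eq_bigr => i _.
by rewrite add0n mulrA.
Qed.
Fixpoint sz (ls : seq 'I_m) : nat :=
  match ls with
  | [::] => 4 * K + 1
  | nu :: ls' => (cnt nu).+1 * sz ls' + 2 * cnt nu * K
  end%N.

Lemma size_rowop o nu : size (rowop o nu) = K.
Proof. by rewrite size_map size_enum_ord. Qed.

Lemma size_leaf wt : size (leaf wt) = (4 * K + 1)%N.
Proof.
have hp j : size (pre j) = j.+1 by elim: j => //= j IH; rewrite size_rcons IH.
have hb j : size (bwd j) = (3 * j)%N by elim: j => //= j IH; rewrite IH; lia.
rewrite /leaf size_cat /= hp hb; lia.
Qed.

Lemma size_lp (g : nat -> seq ins) (add : seq ins) t c G : (forall t, size (g t) = G) ->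
  size (lp g add t c) = (c.+1 * G + c * size add)%N.
Proof.
move=> hg; elim: c t => [|c IH] t /=; first by rewrite hg; lia.
rewrite !size_cat IH hg; lia.
Qed.

Lemma size_nseq (P : seq ins) c : size (flatten (nseq c P)) = (c * size P)%N.
Proof. by elim: c => //= c IH; rewrite size_cat IH; lia. Qed.

Lemma size_gen ls wt : size (gen ls wt) = sz ls.
Proof.
elim: ls wt => [|nu ls IH] wt /=; first exact: size_leaf.
rewrite size_cat (size_lp _ _ _ (G := sz ls)) // size_nseq !size_rowop; lia.
Qed.

Lemma sz_bound ls : (sz ls + 2 * K <= (6 * K + 1) * \prod_(nu <- ls) (cnt nu).+1)%N.
Proof.
elim: ls => [|nu ls IH] /=; first by rewrite big_nil; lia.
rewrite big_cons; nia.
Qed.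
End Prog.

Theorem lemma1 :
  exists C : nat,
  forall (R : realType) (m n : nat) (hk : (n.+1 <= m)%N) (z : 'I_n.+1 -> 'I_m),
  exists (W : nat) (P : slp R[i] m W) (out : 'I_n.+1 -> 'I_W),
    [/\ (W <= C * n.+1)%N,
        (size P <= C * n.+1 * \prod_(nu < m) (mult z nu).+1)%N &
        forall (A : 'M[R[i]]_m) (l : 'I_n.+1),
          run P A (out l) = permanent (Bdiamond (Bmat hk A z) l)].
Proof.
exists 7%N => R m n hk z.
exists (Wd n), (gen hk z (enum 'I_m) 1), (fun l => reg n l); split.
- rewrite /Wd; lia.
- rewrite size_gen.
  have h := sz_bound hk z (enum 'I_m).
  have hp : (\prod_(nu <- enum 'I_m) (cnt z nu).+1 <= \prod_(nu < m) (mult z nu).+1)%N.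
    rewrite big_enum /=; apply: leq_prod => nu _; rewrite ltnS; exact: cnt_le.
  move: h hp; set Pc := (\prod_(nu <- _) _)%N; set Pm := (\prod_(nu < m) _)%N.
  move=> h hp; nia.
- move=> A l.
  have [h1 _] := gen_spec hk z A (enum 'I_m) 1 (fun _ => 0).
  rewrite /run -/(exec A _ _) h1 add0r mul1r.
  have -> : cv (fun _ : 'I_(Wd n) => 0 : R[i]) = 0 by apply/rowP => j; rewrite !mxE.
  rewrite -regroup ?enum_uniq //; last by move=> x _; rewrite mem_enum.
  rewrite /zs -map_comp Dexp ryser; apply: eq_bigr => x _; congr (_ * _).
  rewrite add0r /Lf; apply: eq_bigr => j _; rewrite summxE; apply: eq_bigr => i _.
  by rewrite mulmxnE !mxE mulr_natl.
Qed.
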